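(* Let $(G,\mathcal{T},(A^\circ,B^\circ),k)$ be a Terminal Separation instance, let $\mathcal{T}'\subseteq\mathcal{T}$ be the set of terminal pairs disjoint from $A^\circ\cup B^\circ$, and let $\{s,t\}\in\mathcal{T}'$. Let $(A_s,B_t)$ be a terminal separation of minimum cost among those extending $(A^\circ\cup\{s\},B^\circ\cup\{t\})$, and $(A_t,B_s)$ a terminal separation of minimum cost among those extending $(A^\circ\cup\{t\},B^\circ\cup\{s\})$. Suppose that neither $(A_s,B_t)$ nor $(A_t,B_s)$ contains in $A\cup B$ any terminal pair of $\mathcal{T}'$ other than $\{s,t\}$. Then for every set $A$ with $A^\circ\cup\{s\}\subseteq A\subseteq V(G)\setminus B^\circ$ whose only terminal from pairs of $\mathcal{T}'$ is $s$, we have $d(A)-d(A^\circ)\ge d(A_s)-d(A^\circ)$; and symmetrically, for every set $B$ with $B^\circ\cup\{s\}\subseteq B\subseteq V(G)\setminus A^\circ$ whose only terminal from pairs of $\mathcal{T}'$ is $s$, we have $d(B)-d(B^\circ)\ge d(B_s)-d(B^\circ)$.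
   Context: Graphs may have multiple edges but no loops; $d(X)$ is the number of edges with exactly one endpoint in $X$. For a family $\mathcal{T}$ of pairwise disjoint vertex pairs (terminals are their vertices), a terminal separation is a pair $(A,B)$ of disjoint vertex sets such that each pair in $\mathcal{T}$ either has one vertex in $A$ and one in $B$ or is disjoint from $A\cup B$; $(A',B')$ extends $(A,B)$ if $A\subseteq A'$, $B\subseteq B'$; cost $c(A,B)=(d(A)+d(B))/2$. A Terminal Separation instance $(G,\mathcal{T},(A^\circ,B^\circ),k)$ has every terminal of degree at most one and $(A^\circ,B^\circ)$ a terminal separation. *)

(* Defs.v *)
(* Multigraph: vertices V : finType, edges E : finType with
   endpoints eu, ev : E -> V (parallel edges allowed; loops excluded by hypothesis). *)
From mathcomp Require Import all_boot all_order all_algebra.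
Set Implicit Arguments. Unset Strict Implicit. Unset Printing Implicit Defensive.
Import Order.TTheory GRing.Theory Num.Theory.

Section Defs.
Variables (V E : finType) (eu ev : E -> V).

Definition dcut (X : {set V}) : nat :=
  #|[set e : E | (eu e \in X) != (ev e \in X)]|.

Definition deg (v : V) : nat := #|[set e : E | (eu e == v) || (ev e == v)]|.

Definition cost (A B : {set V}) : rat := ((dcut A + dcut B)%:R / 2%:R)%R.

Definition pair_family (T : {set {set V}}) : Prop :=
  (forall P, P \in T -> #|P| = 2) /\ trivIset T.

Definition terminals (T : {set {set V}}) : {set V} := cover T.

Definition terminal_separation (T : {set {set V}}) (A B : {set V}) : Prop :=
  [disjoint A & B] /\
  forall P, P \in T ->
    (#|P :&: A| = 1 /\ #|P :&: B| = 1) \/ [disjoint P & A :|: B].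

Definition extends (A B A' B' : {set V}) : Prop := A \subset A' /\ B \subset B'.

Definition TS_instance (T : {set {set V}}) (A0 B0 : {set V}) (k : nat) : Prop :=
  pair_family T /\
  (forall v, v \in terminals T -> deg v <= 1) /\
  terminal_separation T A0 B0.

Definition min_cost_ext (T : {set {set V}}) (A1 B1 A B : {set V}) : Prop :=
  terminal_separation T A B /\ extends A1 B1 A B /\
  forall A' B', terminal_separation T A' B' -> extends A1 B1 A' B' ->
    (cost A B <= cost A' B')%R.

End Defs.

(* Main.v *)
Require Import Defs.
From mathcomp Require Import all_boot all_order all_algebra.
Import Order.TTheory GRing.Theory Num.Theory.

Lemma disjP (V : finType) (A B : {set V}) :
  (forall v, v \in A -> v \in B -> False) -> [disjoint A & B].
Proof.
move=> H; rewrite disjoints_subset; apply/subsetP=> v vA.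
rewrite in_setC; apply/negP=> vB; exact: (H v vA vB).
Qed.

Lemma posimod (V E : finType) (eu ev : E -> V) (Z W : {set V}) :
  dcut eu ev (Z :\: W) + dcut eu ev (W :\: Z) <= dcut eu ev Z + dcut eu ev W.
Proof.
rewrite /dcut -cardsUI -[X in _ <= X]cardsUI.
apply: leq_add; apply: subset_leq_card; apply/subsetP=> e;
rewrite !(in_setU, in_setI, inE);
case: (eu e \in Z); case: (ev e \in Z); case: (eu e \in W); case: (ev e \in W);
done.
Qed.

Lemma one_in (V : finType) (P X A0 B0 : {set V}) :
  #|P| = 2 -> #|P :&: A0| = 1 -> #|P :&: B0| = 1 -> A0 \subset X ->
  [disjoint X & B0] -> #|P :&: X| = 1.
Proof.
move=> hP hA hB sAX dXB; apply/eqP; rewrite eqn_leq; apply/andP; split.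
  have H1: #|(P :&: X) :|: (P :&: B0)| <= #|P|.
    by apply: subset_leq_card; rewrite subUset !subsetIl.
  have H2 := cardsUI (P :&: X) (P :&: B0).
  have E: (P :&: X) :&: (P :&: B0) = set0.
    apply/eqP; rewrite -subset0; apply/subsetP=> v.
    rewrite !inE => /andP[/andP[_ vX] /andP[_ vB]].
    by rewrite (disjointFr dXB vX) in vB.
  rewrite E cards0 addn0 hB in H2.
  by rewrite H2 hP addn1 ltnS in H1.
by rewrite -hA; apply: subset_leq_card; apply: setIS.
Qed.

Lemma sep_sym (V : finType) (T : {set {set V}}) A B :
  terminal_separation T A B -> terminal_separation T B A.
Proof.
move=> [d h]; split; first by rewrite disjoint_sym.
move=> P /h [[h1 h2]|h3]; [left; done| right; by rewrite setUC].
Qed.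

Lemma min_sym (V E : finType) (eu ev : E -> V) T A1 B1 A B :
  min_cost_ext eu ev T A1 B1 A B -> min_cost_ext eu ev T B1 A1 B A.
Proof.
move=> [s [[e1 e2] m]]; split; first exact: sep_sym.
split; first done.
move=> A' B' /sep_sym s' [f1 f2].
have := m B' A' s' (conj f2 f1).
by rewrite /cost addnC [(dcut _ _ A' + _)%N]addnC.
Qed.

Lemma core (V E : finType) (eu ev : E -> V) (T Tp : {set {set V}})
  (A0 B0 : {set V}) (x y : V) (AX BY Z : {set V}) :
  pair_family T -> terminal_separation T A0 B0 ->
  Tp \subset T ->
  (forall P, P \in T -> [disjoint P & A0 :|: B0] -> P \in Tp) ->
  [set x; y] \in Tp ->
  min_cost_ext eu ev T (x |: A0) (y |: B0) AX BY ->
  (forall P, P \in Tp -> P != [set x; y] -> ~~ (P \subset AX :|: BY)) ->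
  x |: A0 \subset Z -> Z \subset ~: B0 -> Z :&: cover Tp = [set x] ->
  dcut eu ev AX <= dcut eu ev Z.
Proof.
move=> [pf2 _] sep0 sTp inTp Qin hmin honly sxZ sZB cZ.
have [[sepd sepP] [[eA eB] mn]] := hmin.
have xA : x \in AX by apply: (subsetP eA); rewrite setU11.
have yB : y \in BY by apply: (subsetP eB); rewrite setU11.
have xnB : x \notin BY by rewrite (disjointFr sepd xA).
have xZ : x \in Z by apply: (subsetP sxZ); rewrite setU11.
have A0Z : A0 \subset Z by apply: subset_trans sxZ; apply: subsetUr.
have A0A : A0 \subset AX by apply: subset_trans eA; apply: subsetUr.
have B0B : B0 \subset BY by apply: subset_trans eB; apply: subsetUr.
have nxy : x != y.
  have := pf2 _ (subsetP sTp _ Qin); rewrite cards2.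
  by case: (x != y).
have incov : forall P v, P \in Tp -> v \in P -> v \in cover Tp.
  by move=> P v PT vP; apply/bigcupP; exists P.
have yZ : y \notin Z.
  apply/negP=> yZ.
  have : y \in Z :&: cover Tp.
    by rewrite inE yZ (incov _ y Qin) // !inE eqxx orbT.
  by rewrite cZ inE eq_sym (negbTE nxy).
have sepXY : terminal_separation T (Z :\: BY) (BY :\: Z).
  split.
    apply: disjP => v; rewrite !inE => /andP[vB _] /andP[_ vZ].
    by rewrite vZ in vB.
  move=> P PT; case: (eqVneq P [set x; y]) => [->|nePQ].
    left; split.
      have ->: [set x; y] :&: (Z :\: BY) = [set x].
        apply/setP=> v; rewrite !inE.
        case: (eqVneq v x) => [->|nvx] /=; first by rewrite xnB xZ.
        by case: eqP => // ->; rewrite yB.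
      by rewrite cards1.
    have ->: [set x; y] :&: (BY :\: Z) = [set y].
      apply/setP=> v; rewrite !inE.
      case: (eqVneq v x) => [->|nvx] /=; first by rewrite xZ (negbTE nxy).
      by case: eqP => // ->; rewrite yZ yB.
    by rewrite cards1.
  case PTp: (P \in Tp).
    right.
    have dP : [disjoint P & AX :|: BY].
      case: (sepP P PT) => // [[h1 h2]].
      have : P \subset AX :|: BY.
        apply/setIidPl; apply/eqP; rewrite eqEcard subsetIl /= pf2 //.
        have H := cardsUI (P :&: AX) (P :&: BY).
        have E0 : (P :&: AX) :&: (P :&: BY) = set0.
          apply/eqP; rewrite -subset0; apply/subsetP=> v.
          rewrite !inE => /andP[/andP[_ vA] /andP[_ vB]].
          by rewrite (disjointFr sepd vA) in vB.
        by rewrite E0 cards0 addn0 h1 h2 -setIUr in H; rewrite H.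
      by move=> sub; have := honly P PTp nePQ; rewrite sub.
    apply: disjP => v vP; rewrite !inE => /orP[/andP[_ vZ]|/andP[_ vB]].
      have : v \in Z :&: cover Tp by rewrite inE vZ (incov _ v PTp).
      rewrite cZ inE => /eqP ev_x; subst v.
      by have := disjointFr dP vP; rewrite inE xA.
    by have := disjointFr dP vP; rewrite inE vB orbT.
  have nd : ~~ [disjoint P & A0 :|: B0].
    by apply/negP=> d; rewrite (inTp P PT d) in PTp.
  case: (proj2 sep0 P PT) => [[hA hB]|d]; last by rewrite d in nd.
  left; split.
    apply: (@one_in _ _ _ A0 B0 (pf2 P PT) hA hB).
      apply/subsetP=> v vA; rewrite inE (subsetP A0Z v vA) andbT.
      by rewrite (disjointFr sepd (subsetP A0A v vA)).
    apply: disjP => v; rewrite inE => /andP[_ vZ] vB.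
    by have := subsetP sZB v vZ; rewrite inE vB.
  apply: (@one_in _ _ _ B0 A0 (pf2 P PT) hB hA).
    apply/subsetP=> v vB; rewrite inE (subsetP B0B v vB) andbT.
    by apply/negP=> vZ; have := subsetP sZB v vZ; rewrite inE vB.
  apply: disjP => v; rewrite inE => /andP[_ vB] vA.
  by rewrite (disjointFr sepd (subsetP A0A v vA)) in vB.
have ext : extends (x |: A0) (y |: B0) (Z :\: BY) (BY :\: Z).
  split; apply/subsetP=> v; rewrite !inE => /orP[/eqP->|vv].
  - by rewrite xnB xZ.
  - by rewrite (subsetP A0Z v vv) (disjointFr sepd (subsetP A0A v vv)).
  - by rewrite yZ yB.
  - rewrite (subsetP B0B v vv) andbT; apply/negP=> vZ.
    by have := subsetP sZB v vZ; rewrite inE vv.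
have := mn _ _ sepXY ext; rewrite /cost.
rewrite ler_pM2r ?invr_gt0 ?ltr0n // ler_nat => h.
rewrite -(leq_add2r (dcut eu ev BY)); apply: leq_trans h _.
exact: posimod.
Qed.
Theorem lemma5p2 (V E : finType) (eu ev : E -> V)
  (noloop : forall e, eu e != ev e)
  (T : {set {set V}}) (A0 B0 : {set V}) (k : nat)
  (inst : TS_instance eu ev T A0 B0 k)
  (s t : V)
  (Tp := [set P in T | [disjoint P & A0 :|: B0]])
  (hst : [set s; t] \in Tp)
  (As Bt At Bs : {set V})
  (hsmin : min_cost_ext eu ev T (s |: A0) (t |: B0) As Bt)
  (htmin : min_cost_ext eu ev T (t |: A0) (s |: B0) At Bs)
  (hs_only : forall P, P \in Tp -> P != [set s; t] -> ~~ (P \subset As :|: Bt))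
  (ht_only : forall P, P \in Tp -> P != [set s; t] -> ~~ (P \subset At :|: Bs)) :
  (forall A : {set V}, s |: A0 \subset A -> A \subset ~: B0 ->
     A :&: cover Tp = [set s] ->
     ((dcut eu ev A)%:Z - (dcut eu ev A0)%:Z >= (dcut eu ev As)%:Z - (dcut eu ev A0)%:Z)%R)
  /\
  (forall B : {set V}, s |: B0 \subset B -> B \subset ~: A0 ->
     B :&: cover Tp = [set s] ->
     ((dcut eu ev B)%:Z - (dcut eu ev B0)%:Z >= (dcut eu ev Bs)%:Z - (dcut eu ev B0)%:Z)%R).
Proof.
have [pf [_ sep0]] := inst.
have sTp : Tp \subset T by apply/subsetP=> P; rewrite inE => /andP[].
have inTp : forall P, P \in T -> [disjoint P & A0 :|: B0] -> P \in Tp.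
  by move=> P PT d; rewrite inE PT.
split.
  move=> A h1 h2 h3; rewrite lerD2r lez_nat.
  exact: (@core _ _ _ _ _ _ _ _ _ _ _ _ _ pf sep0 sTp inTp hst hsmin hs_only h1 h2 h3).
move=> B h1 h2 h3; rewrite lerD2r lez_nat.
apply: (@core _ _ _ _ _ _ _ _ _ _ _ _ _ pf (sep_sym _ _ _ _ sep0) sTp _ hst (min_sym _ _ _ _ _ _ _ _ _ htmin) _ h1 h2 h3).
  by move=> P PT; rewrite setUC; apply: inTp.
by move=> P PT ne; rewrite setUC; apply: ht_only.
Qed.
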